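(* Fix a trial $r$ and assume the surrogate satisfies causal necessity in trial $r$, i.e. $ACE_{ss,r}=ACE_{\bar{s}\bar{s},r}=0$. (i) Under monotonicity ($P(U=\bar{s}s\mid R=r)=0$) and $\pi_{s\bar{s},r}>0$: $ACE^Y_r=ACE^S_r\times ACE_{s\bar{s},r}$. (ii) Without monotonicity, assume $\pi_{s\bar{s},r}>0$, $\pi_{\bar{s}s,r}>0$ and $ACE^S_r>0$. If $ACE_{s\bar{s},r}+ACE_{\bar{s}s,r}\ge 0$, then $$ACE^S_r\, ACE_{s\bar{s},r}\le ACE^Y_r\le \tfrac12(ACE_{s\bar{s},r}+ACE_{\bar{s}s,r})+\tfrac12 ACE^S_r\,(ACE_{s\bar{s},r}-ACE_{\bar{s}s,r}),$$ and otherwise $$\tfrac12(ACE_{s\bar{s},r}+ACE_{\bar{s}s,r})+\tfrac12 ACE^S_r\,(ACE_{s\bar{s},r}-ACE_{\bar{s}s,r})\le ACE^Y_r\le ACE^S_r\, ACE_{s\bar{s},r}.$$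
   Context: A unit has trial $R$, treatment $Z\in\{0,1\}$, and binary potential surrogate and endpoint $S(z),Y(z)$, $z=0,1$. $U=(S(1),S(0))$ with values $(1,1),(1,0),(0,1),(0,0)$ labeled $ss,s\bar{s},\bar{s}s,\bar{s}\bar{s}$; $\pi_{ur}=P(U=u\mid R=r)$. For strata with $\pi_{ur}>0$, $ACE_{ur}=E\{Y(1)-Y(0)\mid U=u,R=r\}$; causal necessity is understood as $E\{(Y(1)-Y(0))1\{U=u\}\mid R=r\}=0$ for $u=ss,\bar{s}\bar{s}$ (equivalently $ACE_{ur}=0$ whenever $\pi_{ur}>0$). $ACE^S_r=E\{S(1)-S(0)\mid R=r\}$ and $ACE^Y_r=E\{Y(1)-Y(0)\mid R=r\}$. *)

(* Defs.v *)
(* The conditional law given R = r of the potential outcomes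
   (S(1), S(0), Y(1), Y(0)) is a probability mass function p on bool^4. *)
From HB Require Import structures.
From mathcomp Require Import all_boot all_order all_algebra.
Set Implicit Arguments. Unset Strict Implicit. Unset Printing Implicit Defensive.
Import Order.TTheory GRing.Theory Num.Theory.
Local Open Scope ring_scope.

Definition outcome := ((bool * bool) * (bool * bool))%type.

Definition U (w : outcome) : bool * bool := w.1.
Definition S1 (w : outcome) : bool := w.1.1.
Definition S0 (w : outcome) : bool := w.1.2.
Definition Y1 (w : outcome) : bool := w.2.1.
Definition Y0 (w : outcome) : bool := w.2.2.

Definition ss : bool * bool := (true, true).
Definition ssbar : bool * bool := (true, false).
Definition sbars : bool * bool := (false, true).
Definition sbarsbar : bool * bool := (false, false).

Definition is_pmf (R : realFieldType) (p : outcome -> R) : Prop :=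
  (forall w, 0 <= p w) /\ \sum_(w : outcome) p w = 1.

Definition pi_ (R : realFieldType) (p : outcome -> R) (u : bool * bool) : R :=
  \sum_(w : outcome | U w == u) p w.

Definition EY_on (R : realFieldType) (p : outcome -> R) (u : bool * bool) : R :=
  \sum_(w : outcome | U w == u) p w * ((Y1 w)%:R - (Y0 w)%:R).

(* ACE_{u r} = E{Y(1) - Y(0) | U = u, R = r}  (meaningful when pi_{u r} > 0) *)
Definition ACE_ (R : realFieldType) (p : outcome -> R) (u : bool * bool) : R :=
  EY_on p u / pi_ p u.

Definition ACE_S (R : realFieldType) (p : outcome -> R) : R :=
  \sum_(w : outcome) p w * ((S1 w)%:R - (S0 w)%:R).
Definition ACE_Y (R : realFieldType) (p : outcome -> R) : R :=
  \sum_(w : outcome) p w * ((Y1 w)%:R - (Y0 w)%:R).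

Definition causal_necessity (R : realFieldType) (p : outcome -> R) : Prop :=
  EY_on p ss = 0 /\ EY_on p sbarsbar = 0.

(* Main.v *)
Require Import Defs.
From HB Require Import structures.
From mathcomp Require Import all_boot all_order all_algebra.
From mathcomp Require Import ring lra.
Import Order.TTheory GRing.Theory Num.Theory.
Local Open Scope ring_scope.

Lemma sum_bb (R : realFieldType) (F : bool * bool -> R) :
  \sum_(x : bool * bool) F x = F (true,true) + F (true,false) + F (false,true) + F (false,false).
Proof.
transitivity (\sum_(a : bool) \sum_(b : bool) F (a,b)).
  by rewrite pair_bigA; apply: eq_bigr => -[].
by rewrite /= !big_bool /= !addrA.
Qed.

Lemma sum_out (R : realFieldType) (F : outcome -> R) :
  \sum_(w : outcome) F w = \sum_(x : bool * bool) \sum_(y : bool*bool) F (x,y).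
Proof. by rewrite pair_bigA; apply: eq_bigr => -[]. Qed.

Lemma sum_cond (R : realFieldType) (F : outcome -> R) u :
  \sum_(w : outcome | U w == u) F w = \sum_(y : bool*bool) F (u,y).
Proof.
rewrite big_mkcond sum_out (bigD1 u) //=.
rewrite [X in _ + X]big1 ?addr0.
  by apply: eq_bigr => y _; rewrite /U /= eqxx.
move=> x xu; apply: big1 => y _; rewrite /U /=; by case: eqP xu => // ->; rewrite eqxx.
Qed.

Lemma key (R : realFieldType) (x y z0 z3 a b : R) :
  0 < y -> z0 + x + y + z3 = 1 -> 0 <= z0 -> 0 <= z3 ->
  let m := 2^-1 * (a + b) + 2^-1 * (x - y) * (a - b) in
  (0 <= a + b -> (x - y) * a <= a * x + b * y /\ a * x + b * y <= m) /\
  (a + b < 0 -> m <= a * x + b * y /\ a * x + b * y <= (x - y) * a).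
Proof.
move=> hy e g0 g3 m.
have E1 : a * x + b * y - (x - y) * a = y * (a + b) by ring.
have E2 : m - (a * x + b * y) = 2^-1 * ((z0 + z3) * (a + b)).
  rewrite /m; have -> : z0 + z3 = 1 - x - y by rewrite -e; ring.
  by field.
have h2 : 0 < 2^-1 :> R by rewrite invr_gt0 ltr0n.
have gz : 0 <= z0 + z3 by rewrite addr_ge0.
split; move=> hab; split.
- by rewrite -subr_ge0 E1; apply: mulr_ge0 => //; exact: ltW.
- by rewrite -subr_ge0 E2; apply: mulr_ge0; [exact: ltW | exact: mulr_ge0].
- rewrite -subr_le0 E2; apply: mulr_ge0_le0; first exact: ltW.
  by apply: mulr_ge0_le0 => //; exact: ltW.
- have E3 : (x - y) * a - (a * x + b * y) = - (y * (a + b)) by ring.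
  by rewrite -subr_ge0 E3 oppr_ge0; apply: mulr_ge0_le0 => //; exact: ltW.
Qed.

Theorem proposition3 (R : realFieldType) (p : outcome -> R) :
  is_pmf p -> causal_necessity p ->
  (* (i) monotonicity *)
  (pi_ p sbars = 0 -> 0 < pi_ p ssbar ->
     ACE_Y p = ACE_S p * ACE_ p ssbar) /\
  (* (ii) without monotonicity *)
  (0 < pi_ p ssbar -> 0 < pi_ p sbars -> 0 < ACE_S p ->
     let a := ACE_ p ssbar in
     let b := ACE_ p sbars in
     let m := 2^-1 * (a + b) + 2^-1 * ACE_S p * (a - b) in
     (0 <= a + b -> ACE_S p * a <= ACE_Y p /\ ACE_Y p <= m) /\
     (a + b < 0 -> m <= ACE_Y p /\ ACE_Y p <= ACE_S p * a)).
Proof.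
move=> [p0 p1] [c0 c3].
have eY : ACE_Y p = EY_on p ss + EY_on p ssbar + EY_on p sbars + EY_on p sbarsbar.
  by rewrite /ACE_Y sum_out sum_bb /EY_on !sum_cond.
have eS : ACE_S p = pi_ p ssbar - pi_ p sbars.
  rewrite /ACE_S sum_out sum_bb /pi_ !sum_cond /S1 /S0 /=.
  rewrite -!mulr_suml !subrr !subr0 !sub0r !mulr0 !mulr1 !mulrN1 !addr0 !add0r.
  by [].
have e1 : pi_ p ss + pi_ p ssbar + pi_ p sbars + pi_ p sbarsbar = 1.
  by rewrite -p1 sum_out sum_bb /pi_ !sum_cond.
have g u : 0 <= pi_ p u by apply: sumr_ge0 => w _; exact: p0.
have a1 : pi_ p ssbar != 0 -> EY_on p ssbar = ACE_ p ssbar * pi_ p ssbar.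
  by move=> h; rewrite /ACE_ divfK.
have b1 : pi_ p sbars != 0 -> EY_on p sbars = ACE_ p sbars * pi_ p sbars.
  by move=> h; rewrite /ACE_ divfK.
rewrite eY eS c0 c3 add0r addr0.
split.
  move=> h2 h1.
  have z : EY_on p sbars = 0.
    have h := psumr_eq0P (fun w _ => p0 w) h2.
    by rewrite /EY_on big1 // => w /h ->; rewrite mul0r.
  rewrite z h2 subr0 addr0 a1 1?mulrC //; exact: lt0r_neq0.
move=> h1 h2 hS a b m.
rewrite a1 ?lt0r_neq0 // b1 ?lt0r_neq0 // -/a -/b.
exact (@key R _ _ _ _ a b h2 e1 (g ss) (g sbarsbar)).
Qed.
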